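(* There are no rational numbers (in particular, no integers) $x_1,x_2,x_3,d_1,d_2,d_3,L$ such that $\operatorname{rank}N\le 2$, $\operatorname{rank}N_1=1$, $\operatorname{rank}N_2=2$, and $\tilde p_1=\tilde p_2=\dots=\tilde p_8=0$. Likewise there are no such rational numbers with $\operatorname{rank}N\le 2$, $\operatorname{rank}N_1=1$, $\operatorname{rank}N_2=2$ satisfying $p_0=p_1=p_2=p_3=0$.
   Context: Define $p_0=x_1^2+x_2^2+x_3^2-L^2$, $p_1=x_2^2+x_3^2-d_1^2$, $p_2=x_3^2+x_1^2-d_2^2$, $p_3=x_1^2+x_2^2-d_3^2$, and $\tilde p_1=p_0$, $\tilde p_2=p_1+p_2+p_3$, $\tilde p_3=d_1p_1+d_2p_2+d_3p_3$, $\tilde p_4=x_1p_1+x_2p_2+x_3p_3$, $\tilde p_5=x_1d_1p_1+x_2d_2p_2+x_3d_3p_3$, $\tilde p_6=x_1^2p_1+x_2^2p_2+x_3^2p_3$, $\tilde p_7=d_1^2p_1+d_2^2p_2+d_3^2p_3$, $\tilde p_8=x_1^2d_1^2p_1+x_2^2d_2^2p_2+x_3^2d_3^2p_3$. $N$ is the $3\times 7$ matrix whose $i$-th row is $(1,\ d_i,\ x_i,\ x_id_i,\ x_i^2,\ d_i^2,\ x_i^2d_i^2)$; $N_1$ is the $3\times 2$ matrix with rows $(1,d_i)$; $N_2$ is the $3\times 2$ matrix with rows $(1,x_i)$, $i=1,2,3$. Ranks are over $\mathbb{Q}$. *)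

(* Defs.v *)
From HB Require Import structures.
From mathcomp Require Import all_boot all_order all_algebra.
Set Implicit Arguments. Unset Strict Implicit. Unset Printing Implicit Defensive.
Import Order.TTheory GRing.Theory Num.Theory.
Local Open Scope ring_scope.

Section Defs.
Variables (x1 x2 x3 d1 d2 d3 L : rat).

Definition p0 : rat := x1 ^+ 2 + x2 ^+ 2 + x3 ^+ 2 - L ^+ 2.
Definition p1 : rat := x2 ^+ 2 + x3 ^+ 2 - d1 ^+ 2.
Definition p2 : rat := x3 ^+ 2 + x1 ^+ 2 - d2 ^+ 2.
Definition p3 : rat := x1 ^+ 2 + x2 ^+ 2 - d3 ^+ 2.

Definition pt1 : rat := p0.
Definition pt2 : rat := p1 + p2 + p3.
Definition pt3 : rat := d1 * p1 + d2 * p2 + d3 * p3.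
Definition pt4 : rat := x1 * p1 + x2 * p2 + x3 * p3.
Definition pt5 : rat := x1 * d1 * p1 + x2 * d2 * p2 + x3 * d3 * p3.
Definition pt6 : rat := x1 ^+ 2 * p1 + x2 ^+ 2 * p2 + x3 ^+ 2 * p3.
Definition pt7 : rat := d1 ^+ 2 * p1 + d2 ^+ 2 * p2 + d3 ^+ 2 * p3.
Definition pt8 : rat :=
  x1 ^+ 2 * d1 ^+ 2 * p1 + x2 ^+ 2 * d2 ^+ 2 * p2 + x3 ^+ 2 * d3 ^+ 2 * p3.

(* x_i and d_i, indexed by i : 'I_3 (i = 0,1,2 stands for 1,2,3) *)
Definition xv (i : 'I_3) : rat := nth 0 [:: x1; x2; x3] i.
Definition dv (i : 'I_3) : rat := nth 0 [:: d1; d2; d3] i.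

Definition Nmx : 'M[rat]_(3, 7) :=
  \matrix_(i < 3, j < 7)
    nth 0 [:: 1; dv i; xv i; xv i * dv i; xv i ^+ 2; dv i ^+ 2;
              xv i ^+ 2 * dv i ^+ 2] j.
Definition N1mx : 'M[rat]_(3, 2) := \matrix_(i < 3, j < 2) nth 0 [:: 1; dv i] j.
Definition N2mx : 'M[rat]_(3, 2) := \matrix_(i < 3, j < 2) nth 0 [:: 1; xv i] j.
End Defs.

(* Main.v *)
Require Import Defs.
From HB Require Import structures.
From mathcomp Require Import all_boot all_order all_algebra.
From mathcomp Require Import ring lra zify.
Import Order.TTheory GRing.Theory Num.Theory.
Local Open Scope ring_scope.

Lemma nat_no_sqrt (a b c : nat) : odd c -> coprime a b ->
  (a * a = (2 * c) * (b * b))%N -> False.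
Proof.
move=> oc cab E.
have p2 : prime 2 by [].
have da : (2 %| a)%N.
  have : (2 %| a * a)%N by rewrite E -mulnA dvdn_mulr.
  by rewrite Euclid_dvdM // orbb.
move: da => /dvdnP [a' Ha]. subst a.
have E2 : (2 * (a' * a' * 2) = 2 * (c * (b * b)))%N.
  by nia.
move/eqP: E2; rewrite eqn_mul2l /= => /eqP E3.
have db : (2 %| b)%N.
  have : (2 %| c * (b * b))%N by rewrite -E3 dvdn_mull.
  rewrite Euclid_dvdM // Euclid_dvdM // orbb.
  by rewrite dvdn2 oc /=.
have : (2 %| gcdn (a' * 2) b)%N by rewrite dvdn_gcd dvdn_mull.
by rewrite (eqP cab).
Qed.

Lemma rat_no_sqrt (c : nat) (r : rat) : odd c -> r ^+ 2 != (2 * c)%:R.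
Proof.
move=> oc; apply/negP => /eqP E.
have Hr := divq_num_den r.
have dnz : (denq r)%:~R != 0 :> rat by rewrite intr_eq0 denq_neq0.
have E2 : (numq r * numq r)%:~R = ((2 * c)%:R * (denq r * denq r))%:~R :> rat.
  have key : forall (n d : rat), d != 0 -> (n / d)^+2 * (d*d) = n*n by move=> n d dn; field.
  by rewrite !intrM mulrz_nat -E -[X in X ^+ 2]Hr key.
have E3 := intr_inj E2.
have E4 : (`|numq r| * `|numq r| = (2 * c) * (`|denq r| * `|denq r|))%N.
  by rewrite -!abszM E3 abszM natz.
exact: (@nat_no_sqrt _ _ _ oc (coprime_num_den r) E4).
Qed.

Lemma rank2_of (A : 'M[rat]_(3,2)) (i j : 'I_3) :
  A i ord0 = 1 -> A j ord0 = 1 -> A i ord_max != A j ord_max -> (2 <= \rank A)%N.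
Proof.
move=> Hi Hj Hne.
pose f (k : 'I_2) : 'I_3 := if k == ord0 then i else j.
have: (\rank (rowsub f A) <= \rank A)%N by apply: mxrankS; apply: rowsub_sub.
suff -> : \rank (rowsub f A) = 2%N by [].
apply: mxrank_unit; rewrite unitmxE unitfE.
rewrite (expand_det_row _ ord0) !big_ord_recl big_ord0 /cofactor !det_mx11 !mxE /f /=.
have -> : lift ord0 (ord0 : 'I_1) = ord_max :> 'I_2 by apply/val_inj.
have -> : lift (ord_max : 'I_2) (ord0 : 'I_1) = ord0 :> 'I_2 by apply/val_inj.
rewrite Hi Hj /=.
rewrite add0n /bump /= expr0 expr1 !mul1r mulr1 mulrN1 addr0.
by rewrite subr_eq0 eq_sym.
Qed.

Lemma N1_eq (d1 d2 d3 : rat) : \rank (N1mx d1 d2 d3) = 1%N -> d1 = d2 /\ d1 = d3.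
Proof.
move=> H.
have F : forall i j : 'I_3, dv d1 d2 d3 i != dv d1 d2 d3 j -> False.
  move=> i j ne.
  have := @rank2_of (N1mx d1 d2 d3) i j.
  rewrite !mxE /= H; move/(_ erefl erefl ne) => //.
split.
- by case: (eqVneq d1 d2) => // ne; exfalso; exact: (F 0 1 ne).
- by case: (eqVneq d1 d3) => // ne; exfalso; exact: (F 0 2 ne).
Qed.

Lemma N2_neq (x1 x2 x3 : rat) : \rank (N2mx x1 x2 x3) = 2%N -> ~ (x1 = x2 /\ x1 = x3).
Proof.
move=> H [e2 e3]; subst x2 x3.
have E : N2mx x1 x1 x1 = (const_mx 1 : 'M[rat]_(3,1)) *m (\row_(j < 2) nth 0 [:: 1; x1] j).
  apply/matrixP => i j; rewrite !mxE big_ord1 !mxE mul1r.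
  by case: i => [[|[|[|]]] //= _].
have : (\rank (N2mx x1 x1 x1) <= 1)%N.
  by rewrite E; apply: leq_trans (mxrankM_maxr _ _) (rank_leq_row _).
by rewrite H.
Qed.

Theorem theorem5p2 :
  (~ exists x1 x2 x3 d1 d2 d3 L : rat,
      [/\ (\rank (Nmx x1 x2 x3 d1 d2 d3) <= 2)%N,
          \rank (N1mx d1 d2 d3) = 1%N,
          \rank (N2mx x1 x2 x3) = 2%N &
          (pt1 x1 x2 x3 L = 0 /\ pt2 x1 x2 x3 d1 d2 d3 = 0 /\
           pt3 x1 x2 x3 d1 d2 d3 = 0 /\ pt4 x1 x2 x3 d1 d2 d3 = 0 /\
           pt5 x1 x2 x3 d1 d2 d3 = 0 /\ pt6 x1 x2 x3 d1 d2 d3 = 0 /\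
           pt7 x1 x2 x3 d1 d2 d3 = 0 /\ pt8 x1 x2 x3 d1 d2 d3 = 0)])
  /\
  (~ exists x1 x2 x3 d1 d2 d3 L : rat,
      [/\ (\rank (Nmx x1 x2 x3 d1 d2 d3) <= 2)%N,
          \rank (N1mx d1 d2 d3) = 1%N,
          \rank (N2mx x1 x2 x3) = 2%N &
          [/\ p0 x1 x2 x3 L = 0, p1 x2 x3 d1 = 0,
              p2 x1 x3 d2 = 0 & p3 x1 x2 d3 = 0]]).
Proof.
split.
- move=> [x1 [x2 [x3 [d1 [d2 [d3 [L [_ H1 H2 [e1 [e2 _]]]]]]]]]].
  have [E2 E3] := @N1_eq _ _ _ H1; subst d2 d3.
  apply: (@N2_neq _ _ _ H2).
  move: e1 e2; rewrite /pt1 /pt2 /p0 /p1 /p2 /p3 => e1 e2.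
  have K : 2 * L ^+ 2 = 3 * d1 ^+ 2 by lra.
  have d0 : d1 = 0.
    apply/eqP; apply/negP => dn.
    have := @rat_no_sqrt 3 (2 * L / d1) erefl.
    move/negP; apply; apply/eqP.
    have dn' : d1 != 0 by apply/negP.
    transitivity (2 * (2 * L ^+ 2) / d1 ^+ 2); first by field.
    by rewrite K natrM; field.
  subst d1.
  have h1 : x1 ^+ 2 = 0 by nra.
  have h2 : x2 ^+ 2 = 0 by nra.
  have h3 : x3 ^+ 2 = 0 by nra.
  move/eqP: h1; move/eqP: h2; move/eqP: h3; rewrite !sqrf_eq0 => /eqP-> /eqP-> /eqP->.
  by [].
- move=> [x1 [x2 [x3 [d1 [d2 [d3 [L [_ H1 H2 [e0 e1 e2 e3]]]]]]]]].
  have [E2 E3] := @N1_eq _ _ _ H1; subst d2 d3.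
  apply: (@N2_neq _ _ _ H2).
  move: e1 e2 e3; rewrite /p1 /p2 /p3 => e1 e2 e3.
  have x0 : x1 = 0.
    apply/eqP; apply/negP => xn.
    have := @rat_no_sqrt 1 (d1 / x1) erefl.
    move/negP; apply; apply/eqP.
    have xn' : x1 != 0 by apply/negP.
    have K : d1 ^+ 2 = 2 * x1 ^+ 2 by lra.
    transitivity (d1 ^+ 2 / x1 ^+ 2); first by field.
    by rewrite K muln1; field.
  subst x1.
  have h2 : x2 ^+ 2 = 0 by lra.
  have h3 : x3 ^+ 2 = 0 by lra.
  move/eqP: h2; move/eqP: h3; rewrite !sqrf_eq0 => /eqP-> /eqP->.
  by [].
Qed.
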